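(* Let $\phi$ be any random number generation algorithm for $Y^n$ from the coin process $\mathbf X$ that satisfies the validity condition, and let $T$ be its stopping time. Then for every integer $m\ge 0$ and all real numbers $\tau,\lambda\ge 0$, \[ \Pr(T>m)\ \ge\ P_{Y^n}(\mathcal T_n^c(\tau)) - P_{X^m}(\mathcal S_m(\lambda)) - 2^{-\tau+\lambda} \ =\ P_{X^m}(\mathcal S_m^c(\lambda)) - P_{Y^n}(\mathcal T_n(\tau)) - 2^{-\tau+\lambda}, \] where \[ \mathcal S_m(\lambda)=\Big\{x^m\in\mathcal X^m:\log\tfrac{1}{P_{X^m}(x^m)}\ge\lambda\Big\},\qquad \mathcal T_n(\tau)=\Big\{y^n\in\mathcal Y^n:\log\tfrac{1}{P_{Y^n}(y^n)}\le\tau\Big\}, \] and complements are taken in $\mathcal X^m$ and $\mathcal Y^n$ respectively.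
   Context: Logarithms are base 2. Let $\mathcal X=\{1,\dots,M\}$ and $\mathcal Y=\{1,\dots,N\}$ be finite sets. The coin process $\mathbf X=\{X^m=(X_1,\dots,X_m)\}_{m\ge1}$ is a sequence of random vectors with distributions $P_{X^m}$ on $\mathcal X^m$ that are consistent ($\sum_{x_{m+1}}P_{X^{m+1}}(x^m,x_{m+1})=P_{X^m}(x^m)$), i.e. the finite-dimensional marginals of one random sequence $X_1,X_2,\dots$ (arbitrary, not necessarily stationary or ergodic); the target process $\mathbf Y=\{Y^n\}_{n\ge1}$ on $\mathcal Y$ is defined likewise. A random number generation (RNG) algorithm for $Y^n$ is a map $\phi:\bigcup_{i\ge0}\mathcal X^i\to\{\bot\}\cup\mathcal Y^n$, where $\mathcal X^0=\{\bot\}$ consists of the empty sequence. Its set of leaves $\mathcal L_\phi$ is the set of finite sequences $s$ with $\phi(s)\in\mathcal Y^n$ and $\phi(s')=\bot$ for every proper prefix $s'$ of $s$; $|s|$ is the length of $s$. For $x^m\in\mathcal X^m$ one writes $\phi(x^m)=y^n$ if some prefix $x^i$ ($i\le m$) of $x^m$ is a leaf with $\phi(x^i)=y^n$, and $\phi(x^m)=\bot$ otherwise. The stopping time $T$ is the smallest integer $m\ge0$ with $\phi(X^m)\in\mathcal Y^n$ ($T=\infty$ if there is none). The algorithm satisfies the validity condition if $\sum_{s\in\mathcal L_\phi:\,\phi(s)=y^n}P_{X^{|s|}}(s)=P_{Y^n}(y^n)$ for every $y^n\in\mathcal Y^n$ (equivalently $\lim_{m\to\infty}\Pr(\phi(X^m)=y^n)=P_{Y^n}(y^n)$).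 *)

(* Defs.v *)
From Stdlib Require Import Reals.
From HB Require Import structures.
From mathcomp Require Import all_boot.
Set Implicit Arguments. Unset Strict Implicit. Unset Printing Implicit Defensive.

Lemma Rplus_assoc' : associative Rplus.
Proof. by move=> a b c; rewrite Rplus_assoc. Qed.
HB.instance Definition _ := Monoid.isComLaw.Build R R0 Rplus
  Rplus_assoc' Rplus_comm Rplus_0_l.

Local Open Scope R_scope.

Definition log2 (x : R) : R := ln x / ln 2.

(* A process on the finite alphabet 'I_K is given by the family of its
   finite-dimensional marginals, P s = P_{X^{|s|}}(s) for s : seq 'I_K. *)
Definition is_process (K : nat) (P : seq 'I_K -> R) : Prop :=
  P [::] = 1 /\
  (forall s, 0 <= P s) /\
  (forall m : nat, (0 < m)%N ->
     \big[Rplus/R0]_(s : m.-tuple 'I_K) P (tval s) = 1) /\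
  (forall (m : nat) (s : m.-tuple 'I_K), (0 < m)%N ->
     \big[Rplus/R0]_(a : 'I_K) P (rcons (tval s) a) = P (tval s)).

(* An RNG algorithm phi : (finite sequences over 'I_M) -> {bot} U 'I_N^n,
   with None standing for bot. *)
Definition rng_alg (M N n : nat) := seq 'I_M -> option (n.-tuple 'I_N).

Definition is_leaf (M N n : nat) (phi : rng_alg M N n) (s : seq 'I_M) : bool :=
  isSome (phi s) && all (fun i => ~~ isSome (phi (take i s))) (iota 0 (size s)).

(* Extended output phi(x^m): the output of the leaf that is a prefix of x^m
   (if any), else bot. *)
Definition phi_out (M N n : nat) (phi : rng_alg M N n) (x : seq 'I_M)
  : option (n.-tuple 'I_N) :=
  match [seq take i x | i <- iota 0 (size x).+1 & is_leaf phi (take i x)] with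
  | s :: _ => phi s
  | [::] => None
  end.

(* Validity condition: for all y^n, sum over leaves s with phi(s) = y^n of
   P_{X^{|s|}}(s) equals P_{Y^n}(y^n); the countable sum of nonnegative terms
   is taken grouped by leaf length. *)
Definition valid (M N n : nat) (PX : seq 'I_M -> R) (PY : seq 'I_N -> R)
  (phi : rng_alg M N n) : Prop :=
  forall y : n.-tuple 'I_N,
    infinite_sum
      (fun k => \big[Rplus/R0]_(s : k.-tuple 'I_M |
                   is_leaf phi (tval s) && (phi (tval s) == Some y)) PX (tval s))
      (PY (tval y)).

(* Pr(T > m) = Pr(phi(X^m) = bot) *)
Definition PrT_gt (M N n : nat) (PX : seq 'I_M -> R) (phi : rng_alg M N n)
  (m : nat) : R :=
  \big[Rplus/R0]_(x : m.-tuple 'I_M | phi_out phi (tval x) == None) PX (tval x).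

Definition prob (K m : nat) (P : seq 'I_K -> R) (A : pred (m.-tuple 'I_K)) : R :=
  \big[Rplus/R0]_(x : m.-tuple 'I_K | A x) P (tval x).

(* S_m(lambda) = { x^m : log (1/P(x^m)) >= lambda }, with log(1/0) = +infinity *)
Definition S_set (M m : nat) (PX : seq 'I_M -> R) (lam : R) : pred (m.-tuple 'I_M) :=
  fun x => if Req_EM_T (PX (tval x)) 0 then true
           else if Rle_dec lam (log2 (/ PX (tval x))) then true else false.

(* T_n(tau) = { y^n : log (1/P(y^n)) <= tau }, with log(1/0) = +infinity *)
Definition T_set (N n : nat) (PY : seq 'I_N -> R) (tau : R) : pred (n.-tuple 'I_N) :=
  fun y => if Req_EM_T (PY (tval y)) 0 then false
           else if Rle_dec (log2 (/ PY (tval y))) tau then true else false.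

(* Main.v *)
Require Import Defs.
From Stdlib Require Import Reals Lra.
From mathcomp Require Import all_boot.
Set Implicit Arguments. Unset Strict Implicit. Unset Printing Implicit Defensive.
Local Open Scope R_scope.

Lemma sumR_le (I : Type) (r : seq I) (P : pred I) (F G : I -> R) :
  (forall i, P i -> F i <= G i) ->
  \big[Rplus/R0]_(i <- r | P i) F i <= \big[Rplus/R0]_(i <- r | P i) G i.
Proof.
move=> h; apply: (big_ind2 (fun x y => x <= y)) => //; first lra.
move=> *; lra.
Qed.

Lemma sumR_ge0 (I : Type) (r : seq I) (P : pred I) (F : I -> R) :
  (forall i, P i -> 0 <= F i) -> 0 <= \big[Rplus/R0]_(i <- r | P i) F i.
Proof.
move=> h; apply: (big_ind (fun x => 0 <= x)) => //; first lra.
move=> *; lra.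
Qed.

Lemma sumR_mull (I : Type) (r : seq I) (P : pred I) (F : I -> R) c :
  \big[Rplus/R0]_(i <- r | P i) (c * F i) = c * \big[Rplus/R0]_(i <- r | P i) F i.
Proof.
elim: r => [|a r IH]; rewrite ?big_nil ?big_cons; first ring.
case: (P a); rewrite IH; ring.
Qed.

Lemma sum0tuple (T : finType) (F : 0.-tuple T -> R) :
  \big[Rplus/R0]_(z : 0.-tuple T) F z = F [tuple].
Proof. apply: (big_pred1 [tuple]) => z; symmetry; apply/eqP; exact: tuple0. Qed.

Lemma belast_rcons_head (T : Type) (d : T) (z : seq T) a :
  belast (head d (rcons z a)) (behead (rcons z a)) = z /\
  last (head d (rcons z a)) (behead (rcons z a)) = a.
Proof. by case: z => [|z0 z] //=; rewrite belast_rcons last_rcons. Qed.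

Lemma sum_rcons (T : finType) K (F : K.+1.-tuple T -> R) :
  \big[Rplus/R0]_(x : K.+1.-tuple T) F x =
  \big[Rplus/R0]_(z : K.-tuple T) \big[Rplus/R0]_(a : T) F [tuple of rcons z a].
Proof.
rewrite pair_big /=.
apply: (reindex (fun p : K.-tuple T * T => [tuple of rcons p.1 p.2])).
exists (fun x : K.+1.-tuple T =>
  (([tuple of belast (head (tnth x ord0) x) (behead x)] : K.-tuple T),
   last (head (tnth x ord0) x) (behead x))) => [[z a] _ | x _].
- have [h1 h2] := belast_rcons_head (tnth [tuple of rcons z a] ord0) z a.
  apply/eqP; rewrite xpair_eqE /= h2 eqxx andbT; apply/eqP; apply: val_inj => /=.
  exact: h1.
- apply: val_inj => /=; case: x => [[|x0 s] hs] //=.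
  by rewrite -lastI.
Qed.

Section Phi.
Variables (M N n : nat) (phi : rng_alg M N n).

Definition L (x : seq 'I_M) :=
  [seq take i x | i <- iota 0 (size x).+1 & is_leaf phi (take i x)].

Lemma phi_outE x : phi_out phi x = if L x is s :: _ then phi s else None.
Proof. by []. Qed.

Lemma L_nil : L [::] = if isSome (phi [::]) then [:: [::]] else [::].
Proof. by rewrite /L /is_leaf /= andbT; case: (phi [::]). Qed.

Lemma takel_rcons i (x : seq 'I_M) a : (i <= size x)%N -> take i (rcons x a) = take i x.
Proof. by move=> h; rewrite -cats1 takel_cat. Qed.

Lemma L_rcons x a : L (rcons x a) =
  L x ++ (if is_leaf phi (rcons x a) then [:: rcons x a] else [::]).
Proof.
rewrite /L size_rcons (_ : (size x).+2 = (size x).+1 + 1)%N; last by rewrite addn1.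
rewrite iotaD filter_cat map_cat add0n.
congr (_ ++ _).
- rewrite (@eq_in_filter _ _ (fun i => is_leaf phi (take i x))); last first.
    by move=> i; rewrite mem_iota => /andP[_ hi]; rewrite takel_rcons.
  apply/eq_in_map => i; rewrite mem_filter mem_iota => /andP[_ /andP[_ hi]].
  by rewrite takel_rcons.
- rewrite /= take_oversize ?size_rcons //; case: (is_leaf phi (rcons x a)) => /= //.
  by rewrite take_oversize // size_rcons.
Qed.

Lemma L_leaf x s : s \in L x -> is_leaf phi s.
Proof. by case/mapP => i; rewrite mem_filter => /andP[h _] ->. Qed.

Lemma L_take x s : s \in L x -> exists2 i, (i <= size x)%N & s = take i x.
Proof.
case/mapP => i; rewrite mem_filter mem_iota => /andP[_ /andP[_ hi]] ->.
by exists i.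
Qed.

Lemma phi_out_None x : (phi_out phi x == None) = (L x == [::]).
Proof.
rewrite phi_outE; case E: (L x) => [|s r] //=.
have := L_leaf (x := x) (s := s); rewrite E mem_head /is_leaf => /(_ isT).
by case: (phi s).
Qed.

Lemma Lnil_none x : L x = [::] -> forall i, (i <= size x)%N -> phi (take i x) = None.
Proof.
elim/last_ind: x => [|x a IH].
- rewrite L_nil; case E: (phi [::]) => [y|] // _ i; rewrite leqn0 => /eqP -> /=.
- rewrite L_rcons; case Hl: (is_leaf phi (rcons x a)); first by case: (L x).
  rewrite cats0 => h1 i; rewrite size_rcons leq_eqVlt => /orP[/eqP -> | hi].
  + rewrite take_oversize ?size_rcons //.
    move: Hl; rewrite /is_leaf; case: (phi (rcons x a)) => //= y.
    suff -> : all (fun i => ~~ isSome (phi (take i (rcons x a)))) (iota 0 (size (rcons x a))) by [].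
    apply/allP => j; rewrite mem_iota size_rcons add0n ltnS => /andP[_ hj].
    by rewrite takel_rcons // IH.
  + by rewrite takel_rcons // IH.
Qed.

Lemma leaf_rcons x a :
  is_leaf phi (rcons x a) = isSome (phi (rcons x a)) && (phi_out phi x == None).
Proof.
rewrite phi_out_None; case E: (L x) => [|s r].
- rewrite /is_leaf eqxx andbT [X in _ && X](_ : _ = true) ?andbT //.
  apply/allP => j; rewrite mem_iota size_rcons add0n ltnS => /andP[_ hj].
  by rewrite takel_rcons // (Lnil_none E).
- rewrite andbF; apply/negbTE; rewrite /is_leaf negb_and; apply/orP; right.
  have hs : s \in L x by rewrite E mem_head.
  have [i hi es] := L_take hs.
  have := L_leaf hs; rewrite /is_leaf => /andP[hsome _].
  apply/allPn; exists i; first by rewrite mem_iota size_rcons add0n ltnS hi.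
  by rewrite takel_rcons // -es negbK.
Qed.

Lemma phi_out_nil : phi_out phi [::] = phi [::].
Proof. by rewrite phi_outE L_nil; case E: (phi [::]) => [y|] /=; rewrite ?E. Qed.

Lemma phi_out_rcons x a : phi_out phi (rcons x a) =
  if phi_out phi x is Some y then Some y else phi (rcons x a).
Proof.
rewrite [LHS]phi_outE L_rcons [phi_out phi x]phi_outE.
case Ex: (L x) => [|s r] /=.
- have : phi_out phi x == None by rewrite phi_out_None Ex.
  move=> h; rewrite leaf_rcons h andbT.
  by case E: (phi (rcons x a)) => [y|] /=; rewrite ?E.
- have := L_leaf (x := x) (s := s); rewrite Ex mem_head /is_leaf => /(_ isT).
  by case: (phi s).
Qed.

Lemma phi_out_take x k y :
  phi_out phi (take k x) = Some y -> phi_out phi x = Some y.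
Proof.
elim/last_ind: x => [|x a IH]; first by move=> h; exact: h.
case: (leqP k (size x)) => hk.
- by rewrite takel_rcons // => /IH; rewrite phi_out_rcons => ->.
- by rewrite take_oversize // size_rcons.
Qed.

End Phi.

Section Proc.
Variables (A : nat) (P : seq 'I_A -> R).
Hypothesis hP : is_process P.

Lemma P_ge0 s : 0 <= P s.
Proof. by case: hP => _ [h _]. Qed.

Lemma consist K (s : K.-tuple 'I_A) :
  \big[Rplus/R0]_(a : 'I_A) P (rcons s a) = P s.
Proof.
case: hP => h0 [_ [h1 h2]].
case: K s => [|K] s; last exact: h2.
rewrite (tuple0 s) /= h0 -(h1 1%N) // sum_rcons sum0tuple.
by apply: eq_bigr.
Qed.

Lemma marg (g : seq 'I_A -> R) m K : (m <= K)%N ->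
  \big[Rplus/R0]_(x : K.-tuple 'I_A) (g (take m x) * P x) =
  \big[Rplus/R0]_(z : m.-tuple 'I_A) (g z * P z).
Proof.
elim: K => [|K IH] hm.
- move: hm; rewrite leqn0 => /eqP ->; by rewrite !sum0tuple.
- rewrite leq_eqVlt in hm; case/orP: hm => [/eqP -> | hm].
  + by apply: eq_bigr => x _; rewrite take_oversize // size_tuple.
  + rewrite sum_rcons -IH //; apply: eq_bigr => z _.
    rewrite (eq_bigr (fun a => g (take m z) * P (rcons z a))); last first.
      by move=> a _ /=; rewrite takel_rcons // size_tuple.
    by rewrite sumR_mull consist.
Qed.

Lemma total K : \big[Rplus/R0]_(x : K.-tuple 'I_A) P x = 1.
Proof.
have := marg (fun _ => 1) (leq0n K); rewrite sum0tuple /=.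
case: hP => h0 _; rewrite h0 Rmult_1_l => <-.
by apply: eq_bigr => x _; rewrite Rmult_1_l.
Qed.

End Proc.

Definition hB (Y : Type) (B : pred Y) (o : option Y) :=
  if o is Some y then B y else false.

Lemma group (X Y : finType) (g : X -> option Y) (B : pred Y) (f : X -> R) :
  \big[Rplus/R0]_(y | B y) \big[Rplus/R0]_(x | g x == Some y) f x =
  \big[Rplus/R0]_(x | hB B (g x)) f x.
Proof.
rewrite big_mkcond [RHS]big_mkcond.
rewrite (eq_bigr (fun y => \big[Rplus/R0]_x (if B y && (g x == Some y) then f x else 0)));
  last first.
  move=> y _; case: (B y); first by rewrite big_mkcond.
  by rewrite big1.
rewrite exchange_big; apply: eq_bigr => x _.
case E: (g x) => [y0|] /=.
- rewrite (bigD1 y0) //= eqxx andbT big1; last first.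
    by move=> y hy; rewrite (inj_eq Some_inj) eq_sym (negbTE hy) andbF.
  case: (B y0); ring.
- by rewrite big1 // => y _; rewrite andbF.
Qed.

Section Main.
Variables (M N n : nat) (PX : seq 'I_M -> R) (phi : rng_alg M N n).
Hypothesis hX : is_process PX.

Definition leafsum (y : n.-tuple 'I_N) k :=
  \big[Rplus/R0]_(s : k.-tuple 'I_M | is_leaf phi (tval s) && (phi (tval s) == Some y)) PX (tval s).

Definition Gs (y : n.-tuple 'I_N) K :=
  \big[Rplus/R0]_(x : K.-tuple 'I_M | phi_out phi (tval x) == Some y) PX (tval x).

Lemma partial y K : sum_f_R0 (leafsum y) K = Gs y K.
Proof.
elim: K => [|K IH].
- rewrite /= /leafsum /Gs big_mkcond [RHS]big_mkcond !sum0tuple /=.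
  rewrite phi_out_nil /is_leaf /=.
  by case: (phi [::]) => [y'|] /=.
- rewrite /= IH /leafsum /Gs big_mkcond [X in _ + X]big_mkcond [RHS]big_mkcond.
  rewrite (sum_rcons (fun i : K.+1.-tuple 'I_M => if is_leaf phi i && (phi i == Some y) then PX i else 0)).
  rewrite (sum_rcons (fun i : K.+1.-tuple 'I_M => if phi_out phi i == Some y then PX i else 0)).
  rewrite -big_split; apply: eq_bigr => z _ /=.
  have -> : (if phi_out phi z == Some y then PX z else 0) =
    \big[Rplus/R0]_(a : 'I_M) (if phi_out phi z == Some y then PX (rcons z a) else 0).
    case: (phi_out phi z == Some y); first by rewrite (consist hX z).
    by symmetry; apply: big1.
  rewrite -big_split; apply: eq_bigr => a _ /=.
  rewrite phi_out_rcons leaf_rcons.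
  case: (phi_out phi z) => [y'|]; case: (phi (rcons z a)) => [y''|] /=;
    try (case: (_ == _)); lra.
Qed.

Lemma leafsum_ge0 y k : 0 <= leafsum y k.
Proof. by apply: sumR_ge0 => s _; apply: (P_ge0 hX). Qed.

Lemma Gs_le y K l : infinite_sum (leafsum y) l -> Gs y K <= l.
Proof.
move=> hl; rewrite -partial; apply: growing_ineq; last exact: hl.
by move=> k /=; have := leafsum_ge0 y k.+1; lra.
Qed.

Lemma notS_bound m lam (z : m.-tuple 'I_M) :
  ~~ S_set PX lam z -> Rpower 2 (-lam) < PX z.
Proof.
rewrite /S_set; case: Req_EM_T => // hne; case: Rle_dec => // hn _.
have hp : 0 < PX z by have := P_ge0 hX z; lra.
have l2 : 0 < ln 2 by rewrite -ln_1; apply: ln_increasing; lra.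
move: hn; rewrite /log2 ln_Rinv // => /Rnot_le_lt h.
have h' : - ln (PX z) < lam * ln 2.
  have := Rmult_lt_compat_r (ln 2) _ _ l2 h.
  rewrite /Rdiv Rmult_assoc Rinv_l; lra.
rewrite -(exp_ln _ hp) /Rpower; apply: exp_increasing; lra.
Qed.

End Main.

Lemma notT_bound N n (PY : seq 'I_N -> R) tau (y : n.-tuple 'I_N) :
  0 <= PY y -> ~~ T_set PY tau y -> PY y < Rpower 2 (-tau).
Proof.
rewrite /T_set; case: Req_EM_T => [e _ _ | hne]; first by rewrite e /Rpower; apply: exp_pos.
case: Rle_dec => // hn hge _.
have hp : 0 < PY y by lra.
have l2 : 0 < ln 2 by rewrite -ln_1; apply: ln_increasing; lra.
move: hn; rewrite /log2 ln_Rinv // => /Rnot_le_lt h.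
have h' : tau * ln 2 < - ln (PY y).
  have := Rmult_lt_compat_r (ln 2) _ _ l2 h.
  rewrite /Rdiv Rmult_assoc Rinv_l; lra.
rewrite -(exp_ln _ hp) /Rpower; apply: exp_increasing; lra.
Qed.

Lemma cv_ext u v l : (forall k, u k = v k) -> Un_cv u l -> Un_cv v l.
Proof.
move=> h hu eps he; case: (hu eps he) => N hN; exists N => k hk; rewrite -h; exact: hN.
Qed.

Lemma cv_sum (Y : Type) (r : seq Y) (P : pred Y) (u : Y -> nat -> R) (l : Y -> R) :
  (forall y, Un_cv (u y) (l y)) ->
  Un_cv (fun K => \big[Rplus/R0]_(y <- r | P y) u y K) (\big[Rplus/R0]_(y <- r | P y) l y).
Proof.
move=> h; elim: r => [|a r IH].
- move=> eps he; exists 0%nat => k _; rewrite /R_dist !big_nil Rminus_diag_eq // Rabs_R0.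
  lra.
- rewrite big_cons; case Ha: (P a).
  + apply: (cv_ext _ (CV_plus _ _ _ _ (h a) IH)) => k /=; by rewrite big_cons Ha.
  + apply: (cv_ext _ IH) => k /=; by rewrite big_cons Ha.
Qed.

Lemma cv_le u l c m : Un_cv u l -> (forall K, (m <= K)%N -> u K <= c) -> l <= c.
Proof.
move=> hu hc; apply: Rnot_lt_le => hlt.
have [N hN] : exists N, forall k, (k >= N)%coq_nat -> R_dist (u k) l < l - c.
  by apply: hu; lra.
have h1 := hN (maxn N m) (leP (leq_maxl N m)).
have h2 := hc (maxn N m) (leq_maxr N m).
move: h1; rewrite /R_dist => /Rabs_def2 [? ?]; lra.
Qed.

Unset Implicit Arguments.
Set Strict Implicit.

Theorem theorem1 (M N n : nat) (PX : seq 'I_M -> R) (PY : seq 'I_N -> R)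
  (phi : rng_alg M N n) :
  is_process PX -> is_process PY -> valid PX PY phi ->
  forall (m : nat) (tau lam : R), 0 <= tau -> 0 <= lam ->
    PrT_gt PX phi m >=
      prob PY (predC (@T_set N n PY tau)) - prob PX (@S_set M m PX lam)
        - Rpower 2 (- tau + lam)
    /\
    prob PY (predC (@T_set N n PY tau)) - prob PX (@S_set M m PX lam)
        - Rpower 2 (- tau + lam)
    = prob PX (predC (@S_set M m PX lam)) - prob PY (@T_set N n PY tau)
        - Rpower 2 (- tau + lam).
Proof.
move=> hX hY hV m tau lam htau hlam.
have hc : 0 < Rpower 2 (- tau + lam) by rewrite /Rpower; apply: exp_pos.
have GsPY : forall y K, Gs PX phi y K <= PY y.
  by move=> y K; apply: Gs_le => //; exact: hV.
pose B := predC (@T_set N n PY tau).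
pose g (s : seq 'I_M) := (if hB B (phi_out phi s) then 1 else 0) +
                         (if phi_out phi s == None then 1 else 0).
have hBY : \big[Rplus/R0]_(y | B y) PY (tval y) <=
    \big[Rplus/R0]_(z : m.-tuple 'I_M | hB B (phi_out phi z)) PX z + PrT_gt PX phi m.
  apply: (@cv_le (fun K => \big[Rplus/R0]_(y | B y) Gs PX phi y K) _ _ m).
    apply: (@cv_sum _ _ _ (fun y K => Gs PX phi y K)) => y.
    apply: (cv_ext (@partial M N n PX phi hX y)); exact: hV y.
  move=> K hK; rewrite /Gs.
  rewrite (group (fun x : K.-tuple 'I_M => phi_out phi (tval x)) B (fun x : K.-tuple 'I_M => PX (tval x))).
  rewrite big_mkcond.
  apply: (Rle_trans _ (\big[Rplus/R0]_(x : K.-tuple 'I_M) (g (take m x) * PX x))).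
    apply: sumR_le => x _; have hx := P_ge0 hX x.
    case E: (phi_out phi (take m x)) => [y'|].
    + rewrite /g (phi_out_take E) E /=; set p := PX _ in hx *; case: (~~ _); lra.
    + rewrite /g E /=; set p := PX _ in hx *; case: (hB B (phi_out phi x)); lra.
  rewrite (marg hX g hK).
  have -> : \big[Rplus/R0]_(z : m.-tuple 'I_M) (g z * PX z) =
    \big[Rplus/R0]_(z : m.-tuple 'I_M) (if hB B (phi_out phi z) then PX z else 0) +
    \big[Rplus/R0]_(z : m.-tuple 'I_M) (if phi_out phi z == None then PX z else 0).
    rewrite -big_split; apply: eq_bigr => z _; rewrite /g.
    case: (hB _ _); case: (_ == None) => /=; set p := PX _; ring.
  apply: Req_le; rewrite /PrT_gt; congr (_ + _); symmetry; apply: big_mkcond.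
have hW : \big[Rplus/R0]_(z : m.-tuple 'I_M | hB B (phi_out phi z)) PX z <=
    \big[Rplus/R0]_(z : m.-tuple 'I_M | S_set PX lam z) PX z + Rpower 2 (- tau + lam).
  rewrite (bigID (S_set PX lam)) /=.
  have h1 : \big[Rplus/R0]_(z : m.-tuple 'I_M | hB B (phi_out phi z) && S_set PX lam z) PX z
      <= \big[Rplus/R0]_(z : m.-tuple 'I_M | S_set PX lam z) PX z.
    rewrite big_mkcond [X in Rle _ X]big_mkcond; apply: sumR_le => z _.
    have := P_ge0 hX z; set p := PX _ => hp; case: (hB _ _); case: (S_set _ _ _) => /=; lra.
  apply: Rplus_le_compat; first exact: h1.
  pose I y := \big[Rplus/R0]_(z : m.-tuple 'I_M | phi_out phi z == Some y)
                 (if ~~ S_set PX lam z then PX z else 0).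
  have eW : \big[Rplus/R0]_(z : m.-tuple 'I_M | hB B (phi_out phi z) && ~~ S_set PX lam z) PX z
      = \big[Rplus/R0]_(y | B y) I y.
    rewrite big_mkcondr /I.
    by rewrite (group (fun z : m.-tuple 'I_M => phi_out phi (tval z)) B
      (fun z : m.-tuple 'I_M => if ~~ S_set PX lam z then PX z else 0)).
  have hI : forall y, B y -> I y <= Rpower 2 (- tau + lam) * I y.
    move=> y hy.
    have I0 : 0 <= I y.
      apply: sumR_ge0 => z _; have := P_ge0 hX z; set p := PX _ => hp; case: (~~ _); lra.
    case: (pickP (fun z : m.-tuple 'I_M => (phi_out phi z == Some y) && ~~ S_set PX lam z))
      => [z0 /andP[hz0 hs0] | hnone].
    - have hIz : PX z0 <= I y.
        rewrite /I (bigD1 z0) //= hs0.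
        have : 0 <= \big[Rplus/R0]_(i : m.-tuple 'I_M | (phi_out phi i == Some y) && (i != z0))
                      (if ~~ S_set PX lam i then PX i else 0).
          apply: sumR_ge0 => z _; have := P_ge0 hX z; set p := PX _ => hp; case: (~~ _); lra.
        by move=> h; have := Rplus_le_compat_l (PX z0) _ _ h; rewrite Rplus_0_r; apply.
      have hIG : I y <= Gs PX phi y m.
        rewrite /I /Gs; apply: sumR_le => z _; have := P_ge0 hX z; set p := PX _ => hp; case: (~~ _); lra.
      have hPY := GsPY y m.
      have hT := notT_bound (P_ge0 hY y) hy.
      have hS : Rpower 2 (- lam) < PX z0 := notS_bound hX hs0.
      have ec : Rpower 2 (- tau) = Rpower 2 (- tau + lam) * Rpower 2 (- lam).
        by rewrite /Rpower -exp_plus; f_equal; ring.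
      have h3 := Rmult_lt_compat_l _ _ _ hc hS.
      have h4 := Rmult_le_compat_l _ _ _ (Rlt_le _ _ hc) hIz.
      lra.
    - rewrite /I big1; first lra.
      by move=> z hz; move: (hnone z); rewrite /= hz /= => ->.
  have hWc : \big[Rplus/R0]_(y | B y) I y <=
      Rpower 2 (- tau + lam) * \big[Rplus/R0]_(y | B y) I y.
    by rewrite -sumR_mull; apply: sumR_le.
  have hW1 : \big[Rplus/R0]_(y | B y) I y <= 1.
    rewrite -eW -(total hX m) big_mkcond; apply: sumR_le => z _.
    have := P_ge0 hX z; set p := PX _ => hp; case: (_ && _); lra.
  have := Rmult_le_compat_l _ _ _ (Rlt_le _ _ hc) hW1.
  rewrite eW; lra.
have e1 : prob PY (@T_set N n PY tau) + prob PY (predC (@T_set N n PY tau)) = 1.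
  by rewrite -(total hY n) (bigID (T_set PY tau)).
have e2 : prob PX (@S_set M m PX lam) + prob PX (predC (@S_set M m PX lam)) = 1.
  by rewrite -(total hX m) (bigID (S_set PX lam)).
split; last by lra.
apply: Rle_ge; rewrite /prob; rewrite /prob in e1 e2.
have : \big[Rplus/R0]_(y | B y) PY (tval y) =
  \big[Rplus/R0]_(x : n.-tuple 'I_N | predC (T_set PY tau) x) PY x by [].
lra.
Qed.
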